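(* Let $a,b\in\mathbb{R}$, $\lambda\in\mathbb{C}$, and $n,k\in\mathbb{N}_0$. Then $$y_{3}(n,k;\lambda;a,b)=\sum_{j=0}^{k}\sum_{m=0}^{n}\binom{n}{m}a^{m}b^{n-m}\,y_{1}(m,j;\lambda)\,S_{2}(n-m,k-j).$$
   Context: For $a,b\in\mathbb{R}$, $\lambda\in\mathbb{C}$ and $k\in\mathbb{N}_0$: the numbers $y_3(n,k;\lambda;a,b)$ are defined by $\frac{e^{bkt}}{k!}(\lambda e^{(a-b)t}+1)^{k}=\sum_{n\ge0}y_{3}(n,k;\lambda;a,b)\frac{t^{n}}{n!}$; the numbers $y_1(n,k;\lambda)$ are defined by $\frac{1}{k!}(\lambda e^{t}+1)^{k}=\sum_{n\ge0}y_{1}(n,k;\lambda)\frac{t^{n}}{n!}$; and $S_2(n,k)$ denotes the Stirling numbers of the second kind, defined by $\frac{(e^{t}-1)^{k}}{k!}=\sum_{n\ge0}S_2(n,k)\frac{t^{n}}{n!}$. Convention: $0^0=1$. *)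

(* Defs.v *)
From HB Require Import structures.
From mathcomp Require Import all_boot all_order all_algebra.
From mathcomp Require Import complex.
From mathcomp Require Import reals.
Set Implicit Arguments. Unset Strict Implicit. Unset Printing Implicit Defensive.
Import Order.TTheory GRing.Theory Num.Theory.
Local Open Scope ring_scope.

(** Formal power series in t with coefficients in K: the sequence of
    coefficients of t^n (ordinary coefficients). *)
Definition fps (K : Type) := nat -> K.

Section FPS.
Variable K : fieldType.

Definition fps_one : fps K := fun n => (n == 0%N)%:R.
Definition fps_add (f g : fps K) : fps K := fun n => f n + g n.
Definition fps_scale (c : K) (f : fps K) : fps K := fun n => c * f n.
Definition fps_mul (f g : fps K) : fps K :=
  fun n => \sum_(i < n.+1) f i * g (n - i)%N.
Definition fps_pow (f : fps K) (k : nat) : fps K := iter k (fps_mul f) fps_one.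
Definition fps_exp (c : K) : fps K := fun n => c ^+ n / (n`!)%:R.
Definition egf_coef (f : fps K) (n : nat) : K := (n`!)%:R * f n.

End FPS.

Section Numbers.
Variable R : realType.
Local Notation C := (R[i]).

(** e^{bkt}/k! (lambda e^{(a-b)t} + 1)^k = sum_n y3(n,k;lambda;a,b) t^n/n! *)
Definition y3 (n k : nat) (lam : C) (a b : R) : C :=
  egf_coef
    (fps_scale (k`!%:R)^-1
       (fps_mul (fps_exp ((b * k%:R)%:C%C))
                (fps_pow (fps_add (fps_scale lam (fps_exp ((a - b)%:C%C)))
                                  (fps_one C)) k))) n.

(** (lambda e^t + 1)^k / k! = sum_n y1(n,k;lambda) t^n/n! *)
Definition y1 (n k : nat) (lam : C) : C :=
  egf_coef
    (fps_scale (k`!%:R)^-1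
       (fps_pow (fps_add (fps_scale lam (fps_exp 1)) (fps_one C)) k)) n.

(** (e^t - 1)^k / k! = sum_n S2(n,k) t^n/n! *)
Definition S2 (n k : nat) : C :=
  egf_coef
    (fps_scale (k`!%:R)^-1
       (fps_pow (fps_add (fps_exp 1) (fps_scale (-1) (fps_one C))) k)) n.

End Numbers.

(* Main.v *)
Require Import Defs.
From HB Require Import structures.
From mathcomp Require Import all_boot all_order all_algebra.
From mathcomp Require Import complex.
From mathcomp Require Import reals.
From mathcomp Require Import ring.
Import Order.TTheory GRing.Theory Num.Theory.
Local Open Scope ring_scope.
Set Implicit Arguments. Unset Strict Implicit.

Section Gen.
Variable K : numFieldType.
Variable N : nat.

Definition rel (f : fps K) (P : {poly K}) := forall i, (i < N)%N -> f i = P`_i.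
Definition eqN (P Q : {poly K}) := forall i, (i < N)%N -> P`_i = Q`_i.

Lemma rel_one : rel (fps_one K) 1.
Proof. by move=> i _; rewrite coef1 /fps_one. Qed.

Lemma rel_add f g P Q : rel f P -> rel g Q -> rel (fps_add f g) (P + Q).
Proof. by move=> hf hg i hi; rewrite coefD /fps_add hf ?hg. Qed.

Lemma rel_scale c f P : rel f P -> rel (fps_scale c f) (c *: P).
Proof. by move=> hf i hi; rewrite coefZ /fps_scale hf. Qed.

Lemma rel_mul f g P Q : rel f P -> rel g Q -> rel (fps_mul f g) (P * Q).
Proof.
move=> hf hg i hi; rewrite coefM /fps_mul; apply: eq_bigr => j _.
have hj : (j < N)%N by apply: leq_ltn_trans hi; rewrite -ltnS.
have hij : (i - j < N)%N by apply: leq_ltn_trans hi; rewrite leq_subr.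
by rewrite hf ?hg.
Qed.

Lemma rel_pow f P k : rel f P -> rel (fps_pow f k) (P ^+ k).
Proof.
move=> hf; elim: k => [|k IH]; first by rewrite expr0; exact: rel_one.
by rewrite exprS /fps_pow iterS; apply: rel_mul.
Qed.

Definition E (c : K) : {poly K} := \poly_(i < N) (c ^+ i / (i`!)%:R).

Lemma rel_exp c : rel (fps_exp c) (E c).
Proof. by move=> i hi; rewrite coef_poly hi. Qed.

Lemma eqN_refl P : eqN P P. Proof. by []. Qed.
Lemma eqN_sym P Q : eqN P Q -> eqN Q P. Proof. by move=> h i hi; rewrite h. Qed.
Lemma eqN_trans P Q S : eqN P Q -> eqN Q S -> eqN P S.
Proof. by move=> h1 h2 i hi; rewrite h1 ?h2. Qed.
Lemma eqN_add P Q P' Q' : eqN P P' -> eqN Q Q' -> eqN (P + Q) (P' + Q').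
Proof. by move=> h1 h2 i hi; rewrite !coefD h1 ?h2. Qed.
Lemma eqN_scale c P Q : eqN P Q -> eqN (c *: P) (c *: Q).
Proof. by move=> h i hi; rewrite !coefZ h. Qed.
Lemma eqN_mul P Q P' Q' : eqN P P' -> eqN Q Q' -> eqN (P * Q) (P' * Q').
Proof.
move=> hf hg i hi; rewrite !coefM; apply: eq_bigr => j _.
have hj : (j < N)%N by apply: leq_ltn_trans hi; rewrite -ltnS.
have hij : (i - j < N)%N by apply: leq_ltn_trans hi; rewrite leq_subr.
by rewrite hf ?hg.
Qed.
Lemma eqN_pow P Q k : eqN P Q -> eqN (P ^+ k) (Q ^+ k).
Proof.
move=> h; elim: k => [|k IH]; first by rewrite !expr0.
by rewrite !exprS; apply: eqN_mul.
Qed.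

Lemma fact_neq0 n : (n`!)%:R != 0 :> K.
Proof. by rewrite pnatr_eq0 -lt0n fact_gt0. Qed.

Lemma binom_field (c d : K) i :
  \sum_(j < i.+1) c ^+ j / (j`!)%:R * (d ^+ (i - j)%N / (((i - j)%N)`!)%:R)
  = (c + d) ^+ i / (i`!)%:R.
Proof.
rewrite addrC exprDn mulr_suml; apply: eq_bigr => j _.
have hj : (j <= i)%N by rewrite -ltnS.
have hf := bin_fact hj.
have e : (i`!)%:R = ('C(i, j))%:R * (j`!)%:R * ((i - j)`!)%:R :> K
  by rewrite -!natrM -mulnA hf.
have h1 := fact_neq0 j; have h2 := fact_neq0 (i - j).
rewrite e -mulr_natr; field.
by rewrite h1 h2 /= pnatr_eq0 -lt0n bin_gt0.
Qed.

Lemma E_mul c d : eqN (E c * E d) (E (c + d)).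
Proof.
move=> i hi; rewrite coefM coef_poly hi -binom_field; apply: eq_bigr => j _.
have hj : (j < N)%N by apply: leq_ltn_trans hi; rewrite -ltnS.
have hij : (i - j < N)%N by apply: leq_ltn_trans hi; rewrite leq_subr.
by rewrite !coef_poly hj hij.
Qed.

Lemma E0 : (0 < N)%N -> E 0 = 1.
Proof.
move=> hN; apply/polyP => i; rewrite coef_poly coef1 expr0n.
case: i => [|i] /=; first by rewrite hN fact0 divr1.
by rewrite mul0r if_same.
Qed.

Lemma E_pow c k : (0 < N)%N -> eqN (E c ^+ k) (E (c *+ k)).
Proof.
move=> hN; elim: k => [|k IH]; first by rewrite expr0 mulr0n E0.
rewrite exprS mulrS; apply: eqN_trans (E_mul _ _).
by apply: eqN_mul.
Qed.

Lemma E_comp c a : E c \Po (a *: 'X) = E (a * c).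
Proof.
rewrite /E !poly_def.
rewrite (big_morph (fun p => p \Po (a *: 'X)) (fun p q => comp_polyD p q _) (comp_poly0 _)).
apply: eq_bigr => i _; rewrite comp_polyZ comp_Xn_poly exprZn scalerA; congr (_ *: _).
by rewrite exprMn mulrC mulrA.
Qed.

Lemma comp_pow (p q : {poly K}) k : (p ^+ k) \Po q = (p \Po q) ^+ k.
Proof.
elim: k => [|k IH]; first by rewrite !expr0 comp_polyC.
by rewrite !exprS comp_polyM IH.
Qed.

Lemma coef_dil (p : {poly K}) a i : (p \Po (a *: 'X))`_i = a ^+ i * p`_i.
Proof.
rewrite comp_polyE coef_sum.
under eq_bigr => j _ do rewrite exprZn scalerA coefZ coefXn.
have [hi|hi] := ltnP i (size p).
  rewrite (bigD1 (Ordinal hi)) ?inE //.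
  rewrite big1; last first.
    move=> j hj.
    suff -> : (i == j) = false by rewrite mulr0.
    by apply/negbTE; apply: contra hj => /eqP e; apply/eqP/val_inj.
  by rewrite /= eqxx mulr1 addr0 mulrC.
rewrite big1; last first.
  move=> j _.
  suff -> : (i == j) = false by rewrite mulr0.
  by apply/negbTE; rewrite neq_ltn (leq_trans (ltn_ord j) hi) orbT.
by rewrite nth_default ?mulr0.
Qed.
End Gen.

Section Main.
Variable R : realType.
Local Notation C := (R[i]).
Variable N : nat.
Local Notation E := (@E C N).

Lemma y3E n k lam (a b : R) : (n < N)%N ->
  y3 n k lam a b = (n`!)%:R * ((k`!%:R)^-1 *
   (E ((b * k%:R)%:C)%C * (lam *: E ((a - b)%:C)%C + 1) ^+ k)`_n).
Proof.
move=> hn; rewrite /y3 /egf_coef; congr (_ * _).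
have h := rel_scale (k`!%:R)^-1 (rel_mul (@rel_exp _ N ((b * k%:R)%:C)%C)
   (rel_pow k (rel_add (rel_scale lam (@rel_exp _ N ((a - b)%:C)%C)) (@rel_one C N)))).
by rewrite h // coefZ.
Qed.

Lemma y1E m j lam : (m < N)%N ->
  y1 m j lam = (m`!)%:R * ((j`!%:R)^-1 * ((lam *: E 1 + 1) ^+ j)`_m).
Proof.
move=> hn; rewrite /y1 /egf_coef; congr (_ * _).
have h := rel_scale (j`!%:R)^-1 
   (rel_pow j (rel_add (rel_scale lam (@rel_exp _ N 1)) (@rel_one C N))).
by rewrite h // coefZ.
Qed.

Lemma S2E m j : (m < N)%N ->
  S2 R m j = (m`!)%:R * ((j`!%:R)^-1 * ((E 1 + (-1) *: 1) ^+ j)`_m).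
Proof.
move=> hn; rewrite /S2 /egf_coef; congr (_ * _).
have h := rel_scale (j`!%:R)^-1 
   (rel_pow j (rel_add (@rel_exp _ N 1) (rel_scale (-1) (@rel_one C N)))).
by rewrite h // coefZ.
Qed.
End Main.

Unset Implicit Arguments.
Set Strict Implicit.
Theorem mainTheorem2 (R : realType) (a b : R) (lam : R[i]) (n k : nat) :
  y3 n k lam a b =
  \sum_(0 <= j < k.+1) \sum_(0 <= m < n.+1)
     ('C(n, m))%:R * (a ^+ m)%:C%C * (b ^+ (n - m))%:C%C
       * y1 m j lam * S2 R (n - m) (k - j).
Proof.
pose N := n.+1.
have hN : (0 < N)%N by [].
pose A : {poly R[i]} := lam *: E N 1 + 1.
pose B : {poly R[i]} := E N 1 + (-1) *: 1.
pose X : {poly R[i]} := lam *: E N (a%:C)%C + 1.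
pose Y : {poly R[i]} := E N (b%:C)%C + (-1) *: 1.
have hX : A \Po ((a%:C)%C *: 'X) = X.
  by rewrite /A comp_polyD comp_polyZ E_comp mulr1 -polyC1 comp_polyC.
have hY : B \Po ((b%:C)%C *: 'X) = Y.
  by rewrite /B comp_polyD comp_polyZ E_comp mulr1 -polyC1 comp_polyC.
rewrite (y3E (N := N)) //.
have key : eqN N (E N ((b * k%:R)%:C)%C * (lam *: E N ((a - b)%:C)%C + 1) ^+ k)
              ((Y + X) ^+ k).
  have e1 : ((b * k%:R)%:C)%C = (b%:C)%C *+ k by rewrite rmorphM rmorph_nat mulr_natr.
  rewrite e1.
  apply: eqN_trans; first apply: eqN_mul; [apply: eqN_sym; exact: E_pow|apply: eqN_refl|].
  rewrite -exprMn; apply: eqN_pow.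
  have e2 : Y + X = lam *: E N ((b%:C)%C + ((a - b)%:C)%C) + E N (b%:C)%C.
    have -> : (b%:C)%C + ((a - b)%:C)%C = (a%:C)%C :> R[i] by rewrite -rmorphD addrC subrK.
    by rewrite /X /Y scaleN1r addrC -addrA (addrCA 1) subrr addr0.
  rewrite e2 mulrDr mulr1 -scalerAr; apply: eqN_add; last exact: eqN_refl.
  apply: eqN_scale; exact: E_mul.
rewrite key //.
rewrite exprDn coef_sum !mulr_sumr big_mkord; apply: eq_bigr => j _.
rewrite -hX -hY -!comp_pow [(_ \Po _) * _]mulrC coefMn coefM.
rewrite big_mkord -sumrMnl !mulr_sumr; apply: eq_bigr => m _.
have hm : (m < N)%N by exact: ltn_ord.
have hnm : (n - m < N)%N by rewrite /N ltnS leq_subr.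
rewrite !coef_dil (y1E _ _ hm) (S2E _ _ hnm) !rmorphXn.
have hj : (j <= k)%N by rewrite -ltnS ltn_ord.
have hm' : (m <= n)%N by rewrite -ltnS ltn_ord.
rewrite -(bin_fact hj) -(bin_fact hm') !natrM -[_ *+ 'C(k, j)]mulr_natr /A /B.
have h1 := fact_neq0 R[i] j; have h2 := fact_neq0 R[i] (k - j).
have h3 : ('C(k, j))%:R != 0 :> R[i] by rewrite pnatr_eq0 -lt0n bin_gt0.
field.
by rewrite h1 h2 h3.
Qed.
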